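(* Let $N\ge 2$ and fix real $\Omega\neq 0$ and real $\delta$. For each real coupling family $J=(J_{i,j})_{1\le i<j\le N}$, let $|\Psi_J\rangle$ be the ground state of $$\hat{H}_J = \Omega \sum_{i=1}^N \hat{\sigma}_i^x + \delta \sum_{i=1}^N \hat{\sigma}_i^z + \sum_{1\le i<j\le N} J_{i,j} \hat{\sigma}_i^z \hat{\sigma}_j^z$$ (which is unique up to phase since $\Omega\ne0$), and define the correlation functions $c_{i,j}(J)=\langle\Psi_J|\hat{S}_i^z \hat{S}_j^z|\Psi_J\rangle$ for $1\le i<j\le N$. Then the map $J\mapsto c(J)=(c_{i,j}(J))_{1\le i<j\le N}$ is injective; hence it is a bijection between the set of all real coupling families $J$ and the set of $J$-representable correlation families (its image). That is, if $c(J^{(1)})=c(J^{(2)})$ then $J^{(1)}=J^{(2)}$.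
   Context: $\hat\sigma_i^x,\hat\sigma_i^z$ are Pauli matrices acting on the $i$-th factor of $(\mathbb{C}^2)^{\otimes N}$, and $\hat S_i^z=\frac{\hbar}{2}\hat\sigma_i^z$ is the spin-$z$ operator on site $i$. A family $(c_{i,j})_{i<j}$ is called $J$-representable if it equals $c(J)$ for some real coupling family $J$, i.e. it arises as the ground-state two-point $z$-correlations of $\hat H_J$ for some choice of $J$ (with the given fixed $\Omega,\delta$). *)

(* Defs.v *)
From mathcomp Require Import all_boot all_algebra.
From mathcomp Require Import reals.
From mathcomp Require Export complex.
Set Implicit Arguments. Unset Strict Implicit. Unset Printing Implicit Defensive.
Import GRing.Theory Num.Theory.
Local Open Scope ring_scope.
Local Open Scope complex_scope.

(* Computational basis of (C^2)^{\otimes N}: a basis vector |s_1 ... s_N>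
   is a function s : 'I_N -> bool; bit false = |0> (sigma^z = +1),
   bit true = |1> (sigma^z = -1). *)
Definition basis (N : nat) := {ffun 'I_N -> bool}.

Section Spin.
Variables (R : realType) (N : nat).
Local Notation C := R[i].
Local Notation vec := (basis N -> C).

Definition flip (i : 'I_N) (s : basis N) : basis N :=
  [ffun k => if k == i then ~~ s k else s k].

Definition sigx (i : 'I_N) (v : vec) : vec := fun s => v (flip i s).
Definition sigz (i : 'I_N) (v : vec) : vec :=
  fun s => (if s i then -1 else 1) * v s.
Definition Sz (hbar : R) (i : 'I_N) (v : vec) : vec :=
  fun s => (hbar / 2)%:C * sigz i v s.

Definition ham (Om del : R) (J : 'I_N -> 'I_N -> R) (v : vec) : vec :=
  fun s => Om%:C * (\sum_(i < N) sigx i v s)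
         + del%:C * (\sum_(i < N) sigz i v s)
         + \sum_(i < N) \sum_(j < N | (i < j)%N) (J i j)%:C * sigz i (sigz j v) s.

Definition braket (u v : vec) : C := \sum_(s : basis N) (u s)^* * v s.

Definition eigenpair (H : vec -> vec) (E : C) (v : vec) : Prop :=
  (exists s, v s != 0) /\ forall s, H v s = E * v s.

Definition ground_state (H : vec -> vec) (psi : vec) : Prop :=
  braket psi psi = 1 /\
  exists E, eigenpair H E psi /\
    forall E' phi, eigenpair H E' phi -> E <= E'.

Definition corr (hbar : R) (psi : vec) (i j : 'I_N) : C :=
  braket psi (Sz hbar i (Sz hbar j psi)).

End Spin.

(* Main.v *)
Require Import Defs.
From mathcomp Require Import all_boot all_order all_algebra.
From mathcomp Require Import reals complex spectral sesquilinear.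
From mathcomp Require Import ring.
Import GRing.Theory Num.Theory.
Local Open Scope ring_scope.

Module M1.
Import GRing.Theory Num.Theory.
Local Open Scope ring_scope.
Local Open Scope sesquilinear_scope.
Set Implicit Arguments. Unset Strict Implicit.

Section MX.
Variable C : numClosedFieldType.

Lemma spec_decomp n (M : 'M[C]_n) : M \is hermsymmx ->
  M = (spectralmx M)^t* *m diag_mx (spectral_diag M) *m spectralmx M.
Proof.
move=> /hermitian_normalmx /orthomx_spectralP {1}->.
by rewrite invmx_unitary ?spectral_unitarymx.
Qed.

Lemma spec_PtP n (M : 'M[C]_n) : (spectralmx M)^t* *m spectralmx M = 1%:M.
Proof.
have U := spectral_unitarymx M.
by rewrite -(invmx_unitary U) mulVmx ?unitarymx_unit.
Qed.

Lemma spec_PPt n (M : 'M[C]_n) : spectralmx M *m (spectralmx M)^t* = 1%:M.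
Proof. exact/unitarymxP/spectral_unitarymx. Qed.

Lemma spec_row_eig n (M : 'M[C]_n) (k : 'I_n) : M \is hermsymmx ->
  row k (spectralmx M) *m M = spectral_diag M 0 k *: row k (spectralmx M).
Proof.
move=> hM; rewrite -row_mul {2}(spec_decomp hM) !mulmxA spec_PPt mul1mx.
by rewrite mul_diag_mx; apply/rowP => j; rewrite !mxE.
Qed.

Lemma spec_row_nz n (M : 'M[C]_n) (k : 'I_n) : exists j, spectralmx M k j != 0.
Proof.
apply/existsP; apply: contraT; rewrite negb_exists => /forallP H0.
have := congr1 (fun X : 'M[C]_n => X k k) (spec_PPt M).
rewrite !mxE eqxx /= big1 ?mulr1n => [/esym/eqP|j _]; first by rewrite oner_eq0.
by move: (H0 j); rewrite negbK => /eqP ->; rewrite mul0r.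
Qed.

Lemma mx_var n (M : 'M[C]_n) (E : C) : M \is hermsymmx ->
 (forall k, E <= spectral_diag M 0 k) ->
 forall r : 'rV_n, E * (r *m r^t*) 0 0 <= (r *m M *m r^t*) 0 0 /\
   ((r *m M *m r^t*) 0 0 = E * (r *m r^t*) 0 0 -> r *m M = E *: r).
Proof.
move=> hM hE r.
set P := spectralmx M; set d := spectral_diag M.
set w := r *m P^t*.
have eR : r = w *m P by rewrite /w -mulmxA spec_PtP mulmx1.
have eQ : r *m M *m r^t* = w *m diag_mx d *m w^t*.
  rewrite {1}(spec_decomp hM) -/P -/d !mulmxA -/w eR trmx_mul map_mxM.
  by rewrite !mulmxA mulmxtVK // spectral_unitarymx.
have eN : r *m r^t* = w *m w^t*.
  by rewrite eR trmx_mul map_mxM mulmxA mulmxtVK // spectral_unitarymx.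
have eQs : (r *m M *m r^t*) 0 0 = \sum_k d 0 k * (w 0 k * (w 0 k)^*).
  rewrite eQ mul_mx_diag !mxE; apply: eq_bigr => k _; rewrite !mxE.
  by rewrite mulrAC mulrC.
have eNs : (r *m r^t*) 0 0 = \sum_k w 0 k * (w 0 k)^*.
  by rewrite eN !mxE; apply: eq_bigr => k _; rewrite !mxE.
have diff : (r *m M *m r^t*) 0 0 - E * (r *m r^t*) 0 0 =
    \sum_k (d 0 k - E) * (w 0 k * (w 0 k)^*).
  rewrite eQs eNs mulr_sumr -sumrB; apply: eq_bigr => k _.
  by rewrite mulrBl.
have ge0 : forall k, 0 <= (d 0 k - E) * (w 0 k * (w 0 k)^*).
  by move=> k; rewrite mulr_ge0 ?subr_ge0 ?hE ?mul_conjC_ge0.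
split.
  by rewrite -subr_ge0 diff sumr_ge0.
move=> heq; have /eqP := diff; rewrite heq subrr eq_sym.
move/eqP => Hs.
have H0 := psumr_eq0P (fun k _ => ge0 k) Hs.
have ewd : w *m diag_mx d = E *: w.
  apply/rowP => k; rewrite mul_mx_diag mxE [(E *: w) 0 k]mxE.
  have := H0 k isT; move/eqP; rewrite mulf_eq0 subr_eq0 mulf_eq0 conjC_eq0 orbb.
  by case/orP => /eqP ->; rewrite ?mulr0 ?mul0r // mulrC.
rewrite {1}(spec_decomp hM) -/P -/d !mulmxA -/w ewd -scalemxAl -eR //.
Qed.
End MX.

End M1.
Import M1.

Module M2.
Import GRing.Theory Num.Theory.
Local Open Scope ring_scope.
Local Open Scope sesquilinear_scope.
Set Implicit Arguments. Unset Strict Implicit.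

Section Spin.
Variables (R : realType) (N : nat).
Local Notation C := R[i].
Local Notation vec := (basis N -> C).
Local Notation n := #|basis N|.
Local Notation ev := (@enum_val (basis N) (pred_of_argType (basis N))).
Local Notation rk := (@enum_rank (basis N)).

Lemma sum_ev (F : basis N -> C) : \sum_(s : basis N) F s = \sum_(a < n) F (ev a).
Proof. by rewrite -big_enum_val; apply: eq_bigl => s; rewrite inE. Qed.

Lemma fun_var (H : vec -> vec) (K : basis N -> basis N -> C) :
 (forall v s, H v s = \sum_t v t * K t s) -> (forall s t, (K s t)^* = K t s) ->
 forall E, (forall E' phi, eigenpair H E' phi -> E <= E') ->
 forall phi, E * braket phi phi <= braket phi (H phi) /\
   (braket phi (H phi) = E * braket phi phi -> forall s, H phi s = E * phi s).
Proof.
move=> hH hK E hE phi.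
pose M : 'M[C]_n := \matrix_(a, b) K (ev a) (ev b).
have hM : M \is hermsymmx.
  apply/is_hermitianmxP; rewrite expr0 scale1r; apply/matrixP => a b.
  by rewrite !mxE hK.
have Hev : forall v s, H v s = \sum_(a < n) v (ev a) * M a (rk s).
  by move=> v s; rewrite hH sum_ev; apply: eq_bigr => a _; rewrite mxE enum_rankK.
have hdk : forall k, E <= spectral_diag M 0 k.
  move=> k; apply: (hE _ (fun s => spectralmx M k (rk s))); split.
    by have [j hj] := spec_row_nz M k; exists (ev j); rewrite enum_valK.
  move=> s; rewrite Hev.
  have := congr1 (fun X : 'rV_n => X 0 (rk s)) (spec_row_eig k hM).
  rewrite !mxE => <-; apply: eq_bigr => a _; rewrite enum_valK; congr (_ * _); by rewrite mxE.
pose r : 'rV[C]_n := \row_a phi (ev a).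
have [h1 h2] := mx_var hM hdk r.
have eQ : braket phi (H phi) = (r *m M *m r^t*) 0 0.
  rewrite /braket sum_ev !mxE; apply: eq_bigr => b _; rewrite !mxE mulrC.
  congr (_ * _); rewrite Hev enum_valK; apply: eq_bigr => a _; by rewrite !mxE.
have eN : braket phi phi = (r *m r^t*) 0 0.
  rewrite /braket sum_ev !mxE; apply: eq_bigr => b _; rewrite !mxE mulrC.
  by [].
rewrite eQ eN; split => // /h2 erM s.
rewrite Hev -(enum_rankK s).
have := congr1 (fun X : 'rV_n => X 0 (rk s)) erM.
rewrite !mxE => <-; apply: eq_bigr => a _; by rewrite !mxE !enum_rankK.
Qed.
End Spin.

End M2.
Import M2.

Module M3.
Import GRing.Theory Num.Theory.
Local Open Scope complex_scope.
Local Open Scope ring_scope.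
Set Implicit Arguments. Unset Strict Implicit.

Section Ham.
Variables (R : realType) (N : nat).
Local Notation C := R[i].
Local Notation vec := (basis N -> C).

Definition zr (i : 'I_N) (s : basis N) : R := if s i then -1 else 1.

Lemma zrC i s : (zr i s)%:C = (if s i then -1 else 1 : C).
Proof. by rewrite /zr; case: (s i); rewrite ?rmorphN rmorph1. Qed.

Definition Vpot (del : R) (J : 'I_N -> 'I_N -> R) (s : basis N) : R :=
  del * \sum_(i < N) zr i s + \sum_(i < N) \sum_(j < N | (i < j)%N) J i j * (zr i s * zr j s).

Lemma ham_eq Om del J (v : vec) s :
  ham Om del J v s = Om%:C * \sum_i v (flip i s) + (Vpot del J s)%:C * v s.
Proof.
rewrite /ham /sigx /sigz /Vpot -addrA; congr (_ + _).
rewrite rmorphD !rmorphM !rmorph_sum mulrDl; congr (_ + _).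
  rewrite -mulrA mulr_suml; congr (_ * _); apply: eq_bigr => i _.
  by rewrite -zrC.
rewrite mulr_suml; apply: eq_bigr => i _.
rewrite rmorph_sum mulr_suml; apply: eq_bigr => j _.
  by rewrite -!zrC !rmorphM !mulrA.
Qed.

Lemma flipK (i : 'I_N) : involutive (flip i).
Proof.
move=> s; apply/ffunP => k; rewrite !ffunE; case: eqP => // ->.
by rewrite negbK.
Qed.

Lemma sum_delta (v : vec) x : \sum_t v t * ((x == t)%:R : C) = v x.
Proof.
rewrite (bigD1 x) //= eqxx mulr1 big1 ?addr0 // => t /negPf.
by rewrite eq_sym => ->; rewrite mulr0.
Qed.

Definition Kr Om del J (t s : basis N) : R :=
  Om * \sum_i ((flip i s == t)%:R) + Vpot del J s * (s == t)%:R.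
Definition Kham Om del J (t s : basis N) : C := (Kr Om del J t s)%:C.

Lemma KhamE Om del J t s : Kham Om del J t s =
  Om%:C * \sum_i ((flip i s == t)%:R) + (Vpot del J s)%:C * (s == t)%:R.
Proof.
rewrite /Kham /Kr rmorphD !rmorphM rmorph_sum.
by congr (_ * _ + _ * _); [apply: eq_bigr => i _|]; rewrite rmorph_nat.
Qed.

Lemma ham_rep Om del J (v : vec) s :
  ham Om del J v s = \sum_t v t * Kham Om del J t s.
Proof.
rewrite ham_eq (eq_bigr _ (fun t _ => congr1 _ (KhamE Om del J t s))).
rewrite [RHS](eq_bigr _ (fun t _ => mulrDr _ _ _)).
rewrite big_split /=; congr (_ + _).
  rewrite [RHS](eq_bigr _ (fun t _ => mulrCA _ _ _)) -mulr_sumr; congr (_ * _).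
  symmetry; rewrite (eq_bigr _ (fun t _ => mulr_sumr _ _ _ _)) exchange_big /=.
  by apply: eq_bigr => i _; rewrite sum_delta.
by rewrite [RHS](eq_bigr _ (fun t _ => mulrCA _ _ _)) -mulr_sumr sum_delta.
Qed.

Lemma conjR (x : R) : (x%:C)^* = x%:C :> C.
Proof. exact: conjc_real. Qed.

Lemma Kham_herm Om del J s t : (Kham Om del J s t)^* = Kham Om del J t s.
Proof.
rewrite /Kham conjR /Kr; congr (_ %:C); congr (_ * _ + _).
  apply: eq_bigr => i _.
  have -> : (flip i t == s) = (flip i s == t) by apply/idP/idP => /eqP <-; rewrite flipK.
  by [].
by case: eqP => [->|/nesym/eqP/negPf ->]; rewrite ?eqxx ?mulr0.
Qed.

Lemma ham_var Om del J (psi : vec) :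
  ground_state (ham Om del J) psi ->
  braket psi psi = 1 /\ exists E, eigenpair (ham Om del J) E psi /\
  forall phi, E * braket phi phi <= braket phi (ham Om del J phi) /\
   (braket phi (ham Om del J phi) = E * braket phi phi ->
      forall s, ham Om del J phi s = E * phi s).
Proof.
move=> [h1 [E [hE hmin]]]; split => //; exists E; split => //.
exact: (fun_var (@ham_rep Om del J) (@Kham_herm Om del J) hmin).
Qed.

End Ham.

End M3.
Import M3.

Module M4.
Import Order.TTheory GRing.Theory Num.Theory.
Local Open Scope complex_scope.
Local Open Scope ring_scope.
Set Implicit Arguments. Unset Strict Implicit.

Section PF.
Variables (R : realType) (N : nat).
Local Notation C := R[i].
Local Notation vec := (basis N -> C).

Lemma normR (x : R) : `|x%:C| = `|x|%:C :> C.
Proof. by rewrite normc_def /= expr0n /= addr0 sqrtr_sqr. Qed.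
Lemma realC (x : R) : x%:C \is Num.real.
Proof. by rewrite complex_real. Qed.

Lemma braketE (u v : vec) : braket u v = \sum_s (u s)^* * v s.
Proof. by []. Qed.

Lemma connect_all (P : basis N -> Prop) :
  (forall s i, P s -> P (flip i s)) -> forall s0, P s0 -> forall t, P t.
Proof.
move=> hP s0 h0 t.
pose u k := [ffun i : 'I_N => if (i < k)%N then t i else s0 i].
suff: forall k, P (u k).
  move=> /(_ N); have -> // : u N = t by apply/ffunP => i; rewrite ffunE ltn_ord.
elim => [|k IH].
  by have -> : u 0%N = s0 by apply/ffunP => i; rewrite ffunE.
case: (ltnP k N) => hk; last first.
  have -> : u k.+1 = u k; last by [].
  apply/ffunP => x; rewrite !ffunE.
  have hx : (x < k)%N by apply: leq_trans (ltn_ord x) hk.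
  by rewrite hx ltnS (ltnW hx).
pose i := Ordinal hk.
case: (boolP (t i == s0 i)) => he.
  have -> : u k.+1 = u k; last by [].
  apply/ffunP => x; rewrite !ffunE ltnS leq_eqVlt.
  case: (eqVneq (x : nat) k) => [hx|hx] /=.
    have -> : x = i by apply: val_inj.
    by rewrite ltnn (eqP he).
  by [].
have -> : u k.+1 = flip i (u k); first last.
  by apply: hP.
apply/ffunP => x; rewrite !ffunE ltnS leq_eqVlt.
case: (eqVneq x i) => [->|hx] /=.
  rewrite eqxx ltnn /=; move: he; by case: (t i); case: (s0 i).
have -> // : ((x : nat) == k) = false.
apply/negP => /eqP hxk; move/eqP: hx; apply; exact: val_inj.
Qed.


Lemma ray Om del J (u : vec) : braket u (ham Om del J u) =
  Om%:C * \sum_s \sum_i (u s)^* * u (flip i s) +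
  \sum_s (Vpot del J s)%:C * ((u s)^* * u s).
Proof.
rewrite braketE (eq_bigr _ (fun s _ => congr1 _ (ham_eq Om del J u s))).
rewrite (eq_bigr _ (fun s _ => mulrDr _ _ _)) big_split /=; congr (_ + _).
  rewrite mulr_sumr; apply: eq_bigr => s _.
  by rewrite mulrCA mulr_sumr.
by apply: eq_bigr => s _; rewrite mulrCA.
Qed.

Lemma braket_eig (H : vec -> vec) E (u v : vec) :
  (forall s, H v s = E * v s) -> braket u (H v) = E * braket u v.
Proof.
move=> h; rewrite !braketE mulr_sumr; apply: eq_bigr => s _.
by rewrite h mulrCA.
Qed.

Lemma le_real (x y : C) : x <= y -> y \is Num.real -> x \is Num.real.
Proof.
move=> hxy hy; have -> : x = y - (y - x) by rewrite subKr.
by rewrite rpredB // lerB_real.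
Qed.

Lemma pf_full Om del J (psi : vec) : Om != 0 ->
  ground_state (ham Om del J) psi -> forall s, psi s != 0.
Proof.
move=> hOm hg.
have [hn [E [[hnz heig] hvar]]] := ham_var hg.
set eps : R := if Om < 0 then 1 else -1.
have heps2 : eps * eps = 1 by rewrite /eps; case: ifP; rewrite ?mulr1 ?mulrNN ?mulr1.
have hOe : Om * eps = - `|Om|.
  rewrite /eps; case: ltrP => h.
    by rewrite mulr1 ltr0_norm // opprK.
  by rewrite mulrN1 ger0_norm.
pose sg (s : basis N) : R := \prod_(i < N) (if s i then eps else 1).
have sg2 : forall s, sg s * sg s = 1.
  move=> s; rewrite -big_split /= big1 // => i _.
  by case: (s i); rewrite ?heps2 ?mulr1.
have sgf : forall s i, sg (flip i s) = eps * sg s.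
  move=> s i; rewrite /sg (bigD1 i) //= [X in _ = _ * X](bigD1 i) //= ffunE eqxx.
  have -> : \prod_(j | j != i) (if flip i s j then eps else 1) =
            \prod_(j | j != i) (if s j then eps else 1).
    by apply: eq_bigr => j /negPf hj; rewrite ffunE hj.
  by case: (s i) => /=; rewrite ?mul1r ?mulrA ?heps2 ?mul1r.
pose chi (s : basis N) : C := `|psi s|.
have chi_ge0 : forall s, 0 <= chi s by move=> s; exact: normr_ge0.
have chi2 : forall s, chi s * chi s = (psi s)^* * psi s.
  by move=> s; rewrite -expr2 /chi normCK mulrC.
pose phi : vec := fun s => (sg s)%:C * chi s.
have phiC : forall s, (phi s)^* = phi s.
  by move=> s; apply: conj_Creal; rewrite rpredM ?realC ?ger0_real.
have phi2 : forall s, (phi s)^* * phi s = chi s * chi s.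
  move=> s; rewrite phiC /phi mulrACA -rmorphM sg2 rmorph1 mul1r //.
have hphin : braket phi phi = 1.
  by rewrite -hn !braketE; apply: eq_bigr => s _; rewrite phi2 chi2.
pose T := \sum_s \sum_i chi s * chi (flip i s).
pose S := \sum_s \sum_i (psi s)^* * psi (flip i s).
pose Vt := \sum_s (Vpot del J s)%:C * ((psi s)^* * psi s).
have rayphi : braket phi (ham Om del J phi) = (Om * eps)%:C * T + Vt.
  rewrite ray; congr (_ + _).
    rewrite rmorphM -mulrA; congr (_ * _); rewrite mulr_sumr.
    apply: eq_bigr => s _; rewrite mulr_sumr; apply: eq_bigr => i _.
    rewrite phiC /phi sgf.
    have key : (sg s)%:C * (eps * sg s)%:C = eps%:C :> C by rewrite -rmorphM mulrCA sg2 mulr1.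
    by rewrite mulrACA key.
  by apply: eq_bigr => s _; rewrite phi2 chi2.
have raypsi : braket psi (ham Om del J psi) = Om%:C * S + Vt by rewrite ray.
have hE : braket psi (ham Om del J psi) = E by rewrite (braket_eig _ heig) hn mulr1.
have Vt_real : Vt \is Num.real.
  by apply: rpred_sum => s _; rewrite rpredM ?realC // ger0_real // -chi2 mulr_ge0.
have T_ge0 : 0 <= T by apply: sumr_ge0 => s _; apply: sumr_ge0 => i _; rewrite mulr_ge0.
have rphi_real : braket phi (ham Om del J phi) \is Num.real.
  by rewrite rayphi rpredD // rpredM ?realC ?ger0_real.
have [h1 h2] := hvar phi.
have E_real : E \is Num.real.
  by move: h1; rewrite hphin mulr1 => /le_real; apply.
have x_real : Om%:C * S \is Num.real.
  have -> : Om%:C * S = E - Vt by rewrite -hE raypsi addrK.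
  by rewrite rpredB.
have xle : `|Om%:C * S| <= `|Om|%:C * T.
  rewrite normrM normR ler_wpM2l ?ler0c //.
  apply: le_trans (ler_norm_sum _ _ _) _; apply: ler_sum => s _.
  apply: le_trans (ler_norm_sum _ _ _) _; apply: ler_sum => i _.
  by rewrite normrM norm_conjC.
have rle : braket phi (ham Om del J phi) <= E.
  rewrite rayphi -hE raypsi lerD2r hOe rmorphN mulNr.
  exact: real_lerNnormlW.
have req : braket phi (ham Om del J phi) = E * braket phi phi.
  by rewrite hphin mulr1; apply/le_anti; rewrite rle /=; move: h1; rewrite hphin mulr1.
have heig2 := h2 req.
have step : forall s i, psi s = 0 -> psi (flip i s) = 0.
  move=> s i h0.
  have hphi0 : phi s = 0 by rewrite /phi /chi h0 normr0 mulr0.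
  have := heig2 s; rewrite ham_eq hphi0 !mulr0 addr0 => /eqP.
  rewrite mulf_eq0 => /orP [/eqP /(congr1 (@complex.Re R)) /= hO|]; first by move: hOm; rewrite hO eqxx.
  rewrite /phi (eq_bigr _ (fun i _ => congr1 (fun x => x%:C * chi (flip i s)) (sgf s i))).
  rewrite -mulr_sumr mulf_eq0 => /orP [/eqP /(congr1 (@complex.Re R)) /= he|].
    have : (eps * sg s) * (eps * sg s) = 1 by rewrite mulrACA heps2 sg2 mulr1.
    by rewrite he mul0r => /eqP; rewrite eq_sym oner_eq0.
  move/eqP => hs.
  have := @psumr_eq0P _ _ _ _ (fun j _ => chi_ge0 (flip j s)) hs i isT.
  by move/eqP; rewrite normr_eq0 => /eqP.
move=> s; apply/negP => /eqP h0.
have [s1 hs1] := hnz; move: hs1; rewrite (connect_all (P := fun s => psi s = 0) (fun s i => step s i) h0 s1).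
by rewrite eqxx.
Qed.

End PF.

End M4.
Import M4.

Module M5.
Import Order.TTheory GRing.Theory Num.Theory.
Local Open Scope complex_scope.
Local Open Scope ring_scope.
Set Implicit Arguments. Unset Strict Implicit.

Section Four.
Variables (R : realType) (N : nat).
Local Notation zr := (@zr R N).

Definition Dd (J1 J2 : 'I_N -> 'I_N -> R) (s : basis N) : R :=
  \sum_(k < N) \sum_(l < N | (k < l)%N) (J1 k l - J2 k l) * (zr k s * zr l s).

Definition pp (i j : 'I_N) (x y : bool) : basis N :=
  [ffun k => (x && (k == i)) || (y && (k == j))].

Lemma four_term (i j k l : 'I_N) (a : R) : (i < j)%N -> (k < l)%N ->
  a * (zr k (pp i j false false) * zr l (pp i j false false))
  - a * (zr k (pp i j true false) * zr l (pp i j true false))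
  - a * (zr k (pp i j false true) * zr l (pp i j false true))
  + a * (zr k (pp i j true true) * zr l (pp i j true true))
  = if (k == i) && (l == j) then 4 * a else 0.
Proof.
move=> hij hkl.
have c1 : ~~ ((k == i) && (k == j)).
  by apply/negP => /andP [/eqP -> /eqP hh]; move: hij; rewrite hh ltnn.
have c2 : ~~ ((l == i) && (l == j)).
  by apply/negP => /andP [/eqP -> /eqP hh]; move: hij; rewrite hh ltnn.
have c3 : ~~ ((k == i) && (l == i)).
  by apply/negP => /andP [/eqP hh /eqP hh']; move: hkl; rewrite hh hh' ltnn.
have c4 : ~~ ((k == j) && (l == j)).
  by apply/negP => /andP [/eqP hh /eqP hh']; move: hkl; rewrite hh hh' ltnn.
have c5 : ~~ ((k == j) && (l == i)).
  apply/negP => /andP [/eqP hh /eqP hh']; move: hkl; rewrite hh hh' => hji.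
  by move: (ltn_trans hij hji); rewrite ltnn.
rewrite /zr !ffunE /=.
move: c1 c2 c3 c4 c5.
case: (k == i); case: (k == j); case: (l == i); case: (l == j) => //= _ _ _ _ _; ring.
Qed.

Lemma four (J1 J2 : 'I_N -> 'I_N -> R) (i j : 'I_N) : (i < j)%N ->
  Dd J1 J2 (pp i j false false) - Dd J1 J2 (pp i j true false)
  - Dd J1 J2 (pp i j false true) + Dd J1 J2 (pp i j true true)
  = 4 * (J1 i j - J2 i j).
Proof.
move=> hij; rewrite /Dd -!sumrB -big_split /=.
rewrite (eq_bigr (fun k : 'I_N => \sum_(l < N | (k < l)%N)
   (if (k == i) && (l == j) then 4 * (J1 k l - J2 k l) else 0))); last first.
  move=> k _; rewrite -!sumrB -big_split /=; apply: eq_bigr => l hl.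
  exact: four_term.
rewrite (bigD1 i) //= [X in _ + X]big1 ?addr0; last first.
  by move=> k /negPf hk; apply: big1 => l _; rewrite hk.
rewrite (bigD1 j) //= !eqxx big1 ?addr0 // => l /andP [_ /negPf hl].
by rewrite hl.
Qed.

End Four.

End M5.
Import M5.

Module M6.
Import Order.TTheory GRing.Theory Num.Theory.
Local Open Scope complex_scope.
Local Open Scope ring_scope.
Set Implicit Arguments. Unset Strict Implicit.

Section HK.
Variables (R : realType) (N : nat).
Local Notation C := R[i].
Local Notation vec := (basis N -> C).
Local Notation zr := (@zr R N).

Lemma zrC' i s : (zr i s)%:C = (if s i then -1 else 1 : C).
Proof. exact: zrC. Qed.

Lemma Vpot_diff del (J1 J2 : 'I_N -> 'I_N -> R) s :
  Vpot del J1 s = Vpot del J2 s + Dd J1 J2 s.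
Proof.
rewrite /Vpot /Dd -addrA; congr (_ + _); rewrite -big_split; apply: eq_bigr => k _.
rewrite -big_split; apply: eq_bigr => l _.
rewrite /=; ring.
Qed.

Lemma ham_diff Om del J1 J2 (v : vec) s :
  ham Om del J1 v s = ham Om del J2 v s + (Dd J1 J2 s)%:C * v s.
Proof. by rewrite !ham_eq (Vpot_diff del J1 J2) rmorphD mulrDl addrA. Qed.

Definition W (u : vec) (k l : 'I_N) : C := braket u (sigz k (sigz l u)).

Lemma corrW hbar (u : vec) k l :
  corr hbar u k l = ((hbar / 2)%:C) ^+ 2 * W u k l.
Proof.
rewrite /corr /W !braketE mulr_sumr; apply: eq_bigr => s _.
rewrite /Sz /sigz; ring.
Qed.

Definition G J1 J2 (u : vec) : C := \sum_s (Dd J1 J2 s)%:C * ((u s)^* * u s).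

Lemma GW J1 J2 (u : vec) : G J1 J2 u =
  \sum_(k < N) \sum_(l < N | (k < l)%N) (J1 k l - J2 k l)%:C * W u k l.
Proof.
have hD : forall s, (Dd J1 J2 s)%:C = \sum_(k < N) \sum_(l < N | (k < l)%N)
    (J1 k l - J2 k l)%:C * ((if s k then -1 else 1) * (if s l then -1 else 1)).
  move=> s; rewrite /Dd rmorph_sum; apply: eq_bigr => k _.
  rewrite rmorph_sum; apply: eq_bigr => l _.
  by rewrite -!zrC' !rmorphM.
rewrite /G (eq_bigr _ (fun s _ => congr1 (fun x => x * _) (hD s))).
rewrite (eq_bigr _ (fun s _ => mulr_suml _ _ _ _)) exchange_big /=.
apply: eq_bigr => k _.
rewrite (eq_bigr _ (fun s _ => mulr_suml _ _ _ _)) exchange_big /=.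
apply: eq_bigr => l _.
rewrite /W braketE mulr_sumr; apply: eq_bigr => s _.
rewrite /sigz /=; ring.
Qed.

Lemma bra_diff Om del J1 J2 (u : vec) :
  braket u (ham Om del J1 u) = braket u (ham Om del J2 u) + G J1 J2 u.
Proof.
rewrite !braketE /G -big_split; apply: eq_bigr => s _.
by rewrite (ham_diff Om del J1 J2) mulrDr mulrCA.
Qed.

End HK.

Lemma main_aux (R : realType) (N : nat) (hbar Om del : R)
    (J1 J2 : 'I_N -> 'I_N -> R) (psi1 psi2 : basis N -> R[i]) :
  (2 <= N)%N -> 0 < hbar -> Om != 0 ->
  ground_state (ham Om del J1) psi1 ->
  ground_state (ham Om del J2) psi2 ->
  (forall i j : 'I_N, (i < j)%N -> corr hbar psi1 i j = corr hbar psi2 i j) ->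
  forall i j : 'I_N, (i < j)%N -> J1 i j = J2 i j.
Proof.
move=> _ hh hOm hg1 hg2 hc i j hij.
have [hn1 [E1 [[_ heig1] hvar1]]] := ham_var hg1.
have [hn2 [E2 [[_ heig2] hvar2]]] := ham_var hg2.
have hW : forall k l : 'I_N, (k < l)%N -> W psi1 k l = W psi2 k l.
  move=> k l hkl; have := hc k l hkl; rewrite !corrW; apply: mulfI.
  rewrite expf_eq0 /= -(rmorph0 (real_complex R)).
  apply/negP => /eqP /(congr1 (@complex.Re R)) /= /eqP.
  by rewrite mulf_eq0 invr_eq0 pnatr_eq0 orbF; apply/negP; rewrite gt_eqF.
have hG : G J1 J2 psi1 = G J1 J2 psi2.
  rewrite !GW; apply: eq_bigr => k _; apply: eq_bigr => l hl; by rewrite hW.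
set g := G J1 J2 psi2.
have e2 : braket psi2 (ham Om del J2 psi2) = E2 by rewrite (braket_eig _ heig2) hn2 mulr1.
have e1 : braket psi1 (ham Om del J1 psi1) = E1 by rewrite (braket_eig _ heig1) hn1 mulr1.
have r21 : braket psi2 (ham Om del J1 psi2) = E2 + g by rewrite (bra_diff Om del J1 J2) e2.
have r12 : braket psi1 (ham Om del J2 psi1) = E1 - g.
  by rewrite -e1 (bra_diff Om del J1 J2) hG addrK.
have [v1 v1e] := hvar1 psi2.
have [v2 _] := hvar2 psi1.
rewrite hn2 mulr1 r21 in v1; rewrite hn1 mulr1 r12 in v2.
have eE : E1 = E2 + g by apply/le_anti; rewrite v1 /= -lerBrDr.
have heig12 := v1e; rewrite r21 hn2 mulr1 -eE in heig12; have {}heig12 := heig12 erefl.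
have hD : forall s, (Dd J1 J2 s)%:C = E1 - E2.
  move=> s; apply: (mulIf (pf_full hOm hg2 s)).
  have := heig12 s; rewrite (ham_diff Om del J1 J2) heig2 => h.
  by rewrite mulrBl -h addrC addKr.
have hc' : forall s, Dd J1 J2 s = Dd J1 J2 (pp i j false false).
  by move=> s; apply: complexI; rewrite !hD.
have := four J1 J2 hij.
rewrite (hc' (pp i j true false)) (hc' (pp i j false true)) (hc' (pp i j true true)).
rewrite subrr sub0r addrC subrr => /esym /eqP.
rewrite mulf_eq0 pnatr_eq0 /= subr_eq0 => /eqP //.
Qed.

End M6.
Import M6.


Theorem mainTheorem4 (R : realType) (N : nat) (hbar Om del : R)
    (J1 J2 : 'I_N -> 'I_N -> R) (psi1 psi2 : basis N -> R[i]) :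
  (2 <= N)%N -> 0 < hbar -> Om != 0 ->
  ground_state (ham Om del J1) psi1 ->
  ground_state (ham Om del J2) psi2 ->
  (forall i j : 'I_N, (i < j)%N -> corr hbar psi1 i j = corr hbar psi2 i j) ->
  forall i j : 'I_N, (i < j)%N -> J1 i j = J2 i j.
Proof. exact: main_aux. Qed.
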